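(* Fix $\beta>2$ and let $F_\beta(\mathbf{x},r)$, $r_1^\beta<r_2^\beta$, $y_1^\beta(r)$, $u_\beta(r)$, $\boldsymbol{\sigma}_1^\beta(r)$, $\boldsymbol{\sigma}_2^\beta(r)$, $\mathbf{p}^\beta(r)$ be as in the context. For $r\in(0,r_1^\beta)\cup(r_1^\beta,r_2^\beta)$ define $$\mathbf{l}_\beta(r)=\begin{cases}\{\mathbf{x}: x_1+x_2=H_\beta(y_1^\beta(r))+K_\beta(y_1^\beta(r))\}\cap\Xi & r\in(0,r_1^\beta),\\ \{\mathbf{x}: x_1+x_2=2u_\beta(r)\}\cap\Xi & r\in(r_1^\beta,r_2^\beta).\end{cases}$$ Then the restriction of $F_\beta(\cdot,r)$ to $\mathbf{l}_\beta(r)$ attains its minimum only at $\boldsymbol{\sigma}_1^\beta(r)$ and $\boldsymbol{\sigma}_2^\beta(r)$ if $r\in(0,r_1^\beta)$, and only at $\mathbf{p}^\beta(r)$ if $r\in(r_1^\beta,r_2^\beta)$.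
   Context: $\Xi=\{(x_1,x_2): x_1,x_2\ge0,\ x_1+x_2\le1\}$, $x_0=1-x_1-x_2$, $\mathbf{v}_k=(\cos(2\pi k/3),\sin(2\pi k/3))$, $F_\beta(\mathbf{x},r)=-\frac12|\sum_{k=0}^2x_k\mathbf{v}_k|^2+\frac1\beta\sum_{k=0}^2x_k\log(3x_k)+r\,x_0-\frac r2(x_1+x_2)$ (external field of magnitude $r$, angle $\pi$), with $0\log0=0$. Let $h(t)=-3t(1-2t)\log\frac{1-2t}{t}-3t+1$, $f_r(t)=\frac{2}{3(1-r-3t)}\log\frac{1-2t}{t}$, $k_r=(1-r)/3$; for $0<r<1$, $m_0(r)$ is the unique solution in $(0,k_r)$ of $h(t)=r$; $r_2^\beta$ is the unique $r\in(0,1)$ with $f_r(m_0(r))=\beta$; $r_1^\beta=1-\frac2\beta-\frac{2}{3\beta}\log(\frac{3\beta}2-2)$. For $r\in(0,r_2^\beta)$, $u_\beta(r)$ is the unique solution of $f_r(t)=\beta$ in $(m_0(r),k_r)$ and $\mathbf{p}^\beta(r)=(u_\beta(r),u_\beta(r))$. Let $G_\beta(x)=\frac1\beta\log x-\frac32x$, $l_\beta=2/(3\beta)$, $g_\beta=G_\beta(l_\beta)$; for $y<g_\beta$, $H_\beta(y)<l_\beta<K_\beta(y)$ solve $G_\beta(x)=y$, and $H_\beta(g_\beta)=K_\beta(g_\beta)=l_\beta$. For $r\le r_1^\beta$, $y_1^\beta(r)$ is the unique $y\le g_\beta$ with $K_\beta(y-3r/2)+H_\beta(y)+K_\beta(y)=1$;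 $\boldsymbol{\sigma}_1^\beta(r)=(K_\beta(y_1^\beta(r)),H_\beta(y_1^\beta(r)))$ and $\boldsymbol{\sigma}_2^\beta(r)=(H_\beta(y_1^\beta(r)),K_\beta(y_1^\beta(r)))$. *)

(* Defs.v *)
From Stdlib Require Import Reals Lra ClassicalEpsilon.
Open Scope R_scope.

(* "the unique x with P x": a chosen witness of P (well-defined, and equal to
   the unique solution whenever the paper's uniqueness claim holds). *)
Definition the (P : R -> Prop) : R := epsilon (inhabits 0) P.

(* Points x = (x1, x2); x0 = 1 - x1 - x2. *)
Definition pt := (R * R)%type.

Definition Xi (x : pt) : Prop :=
  0 <= fst x /\ 0 <= snd x /\ fst x + snd x <= 1.

(* x log(3x) with the convention 0 log 0 = 0 *)
Definition xlog3x (t : R) : R := if Rle_dec t 0 then 0 else t * ln (3 * t).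

Definition vx (k : R) : R := cos (2 * PI * k / 3).
Definition vy (k : R) : R := sin (2 * PI * k / 3).

Definition F (beta : R) (x : pt) (r : R) : R :=
  let x1 := fst x in let x2 := snd x in let x0 := 1 - x1 - x2 in
  let sx := x0 * vx 0 + x1 * vx 1 + x2 * vx 2 in
  let sy := x0 * vy 0 + x1 * vy 1 + x2 * vy 2 in
  - / 2 * (sx ^ 2 + sy ^ 2)
  + / beta * (xlog3x x0 + xlog3x x1 + xlog3x x2)
  + r * x0 - r / 2 * (x1 + x2).

Definition h (t : R) : R := -3 * t * (1 - 2 * t) * ln ((1 - 2 * t) / t) - 3 * t + 1.
Definition f (r t : R) : R := 2 / (3 * (1 - r - 3 * t)) * ln ((1 - 2 * t) / t).
Definition k (r : R) : R := (1 - r) / 3.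

Definition m0 (r : R) : R := the (fun t => 0 < t < k r /\ h t = r).
Definition r2 (beta : R) : R := the (fun r => 0 < r < 1 /\ f r (m0 r) = beta).
Definition r1 (beta : R) : R :=
  1 - 2 / beta - 2 / (3 * beta) * ln (3 * beta / 2 - 2).
Definition u (beta r : R) : R := the (fun t => m0 r < t < k r /\ f r t = beta).
Definition p (beta r : R) : pt := (u beta r, u beta r).

Definition G (beta x : R) : R := / beta * ln x - 3 / 2 * x.
Definition l (beta : R) : R := 2 / (3 * beta).
Definition g (beta : R) : R := G beta (l beta).
Definition H (beta y : R) : R := the (fun x => 0 < x <= l beta /\ G beta x = y).
Definition K (beta y : R) : R := the (fun x => l beta <= x /\ G beta x = y).

Definition y1 (beta r : R) : R :=
  the (fun y => y <= g beta /\
        K beta (y - 3 * r / 2) + H beta y + K beta y = 1).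

Definition sigma1 (beta r : R) : pt := (K beta (y1 beta r), H beta (y1 beta r)).
Definition sigma2 (beta r : R) : pt := (H beta (y1 beta r), K beta (y1 beta r)).

Definition lline1 (beta r : R) (x : pt) : Prop :=
  Xi x /\ fst x + snd x = H beta (y1 beta r) + K beta (y1 beta r).
Definition lline2 (beta r : R) (x : pt) : Prop :=
  Xi x /\ fst x + snd x = 2 * u beta r.

Definition is_argmin (S : pt -> Prop) (phi : pt -> R) (x : pt) : Prop :=
  S x /\ forall z, S z -> phi x <= phi z.

(* Main.v *)
Require Import Defs.
From Stdlib Require Import Reals Lra ClassicalEpsilon Ranalysis5.
From Coquelicot Require Import Coquelicot.
Open Scope R_scope.

Lemma ln_lt_sub1 z : 0 < z -> z <> 1 -> ln z < z - 1.
Proof.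
  intros Hz H1. assert (He := exp_ineq1 (z - 1)).
  assert (z - 1 <> 0) by lra. specialize (He H).
  rewrite <- (exp_ln z) in He at 1 by lra.
  apply exp_lt_inv. lra.
Qed.

Lemma ln_le_sub1 z : 0 < z -> ln z <= z - 1.
Proof.
  intros Hz. destruct (Req_dec z 1) as [->|H]. rewrite ln_1; lra.
  left; now apply ln_lt_sub1.
Qed.

Lemma ln_gt_inv z : 0 < z -> z <> 1 -> 1 - / z < ln z.
Proof.
  intros Hz H1. assert (Hi : 0 < / z) by (apply Rinv_0_lt_compat; lra).
  assert (/ z <> 1). { intro E. apply H1. rewrite <- (Rinv_inv z), E. field. }
  assert (H2 := ln_lt_sub1 (/ z) Hi H). rewrite ln_Rinv in H2 by lra. lra.
Qed.

Lemma ln_ge_inv z : 0 < z -> 1 - / z <= ln z.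
Proof.
  intros Hz. destruct (Req_dec z 1) as [->|H]. rewrite ln_1; lra.
  left; now apply ln_gt_inv.
Qed.

Lemma strict_incr (f f' : R -> R) a b :
  (forall c, a <= c <= b -> derivable_pt_lim f c (f' c)) ->
  (forall c, a < c < b -> 0 < f' c) ->
  forall x y, a <= x -> x < y -> y <= b -> f x < f y.
Proof.
  intros Hd Hp x y Hx Hxy Hy.
  destruct (MVT_cor2 f f' x y Hxy) as [c [Hc1 Hc2]].
  { intros c Hc. apply Hd. lra. }
  assert (0 < f' c) by (apply Hp; lra).
  assert (0 < f' c * (y - x)) by (apply Rmult_lt_0_compat; lra). lra.
Qed.

Lemma strict_decr (f f' : R -> R) a b :
  (forall c, a <= c <= b -> derivable_pt_lim f c (f' c)) ->
  (forall c, a < c < b -> f' c < 0) ->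
  forall x y, a <= x -> x < y -> y <= b -> f y < f x.
Proof.
  intros Hd Hp x y Hx Hxy Hy.
  assert (H := strict_incr (fun t => - f t) (fun t => - f' t) a b).
  assert (- f x < - f y); [|lra].
  apply H; auto.
  - intros c Hc. apply derivable_pt_lim_opp. now apply Hd.
  - intros c Hc. specialize (Hp c Hc). lra.
Qed.

Lemma ivt_up (f : R -> R) x y c :
  (forall a, x <= a <= y -> continuity_pt f a) -> x < y -> f x < c -> c < f y ->
  exists z, x < z < y /\ f z = c.
Proof.
  intros Hc Hxy H1 H2.
  destruct (IVT_interv (fun t => f t - c) x y) as [z [Hz Ez]]; auto.
  - intros a Ha. apply continuity_pt_minus. now apply Hc. apply continuity_pt_const. intros u v; auto.
  - lra.
  - lra.
  - exists z. assert (f z = c) by lra. split; auto.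
    split; destruct Hz as [Hz1 Hz2]; [destruct Hz1 as [|E]|destruct Hz2 as [|E]]; auto;
      subst; lra.
Qed.

Lemma ivt_down (f : R -> R) x y c :
  (forall a, x <= a <= y -> continuity_pt f a) -> x < y -> c < f x -> f y < c ->
  exists z, x < z < y /\ f z = c.
Proof.
  intros Hc Hxy H1 H2.
  destruct (ivt_up (fun t => - f t) x y (- c)) as [z [Hz Ez]]; auto; try lra.
  intros a Ha. apply continuity_pt_opp. auto.
  exists z; split; auto; lra.
Qed.
Lemma vx0 : vx 0 = 1. Proof. unfold vx. replace (2*PI*0/3) with 0 by field. apply cos_0. Qed.
Lemma vy0 : vy 0 = 0. Proof. unfold vy. replace (2*PI*0/3) with 0 by field. apply sin_0. Qed.
Lemma vx1 : vx 1 = - / 2. Proof. unfold vx. replace (2*PI*1/3) with (PI - PI/3) by field.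
  rewrite Rtrigo_facts.cos_pi_minus, cos_PI3. field. Qed.
Lemma vy1 : vy 1 = sqrt 3 / 2. Proof. unfold vy. replace (2*PI*1/3) with (PI - PI/3) by field.
  rewrite sin_PI_x, sin_PI3. reflexivity. Qed.
Lemma vx2 : vx 2 = - / 2. Proof. unfold vx. replace (2*PI*2/3) with (PI/3 + PI) by field.
  rewrite neg_cos, cos_PI3. field. Qed.
Lemma vy2 : vy 2 = - (sqrt 3 / 2). Proof. unfold vy. replace (2*PI*2/3) with (PI/3 + PI) by field.
  rewrite neg_sin, sin_PI3. reflexivity. Qed.

Lemma xlog3x_eq t : 0 <= t -> xlog3x t = t * ln (3 * t).
Proof. intros Ht. unfold xlog3x. destruct (Rle_dec t 0). assert (t = 0) by lra. subst; ring. reflexivity. Qed.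

Definition psi (beta a d : R) : R :=
  - (3/2) * d^2 + / beta * ((a + d) * ln (3 * (a + d)) + (a - d) * ln (3 * (a - d))).

Definition Fc (beta r s : R) : R :=
  - / 2 * (1 - s - s / 2) ^ 2 + / beta * xlog3x (1 - s) + r * (1 - s) - r / 2 * s.

Lemma F_line beta r x1 x2 : 0 < beta -> 0 <= x1 -> 0 <= x2 ->
  F beta (x1, x2) r = Fc beta r (x1 + x2) + psi beta ((x1 + x2)/2) ((x1 - x2)/2).
Proof.
  intros Hb H1 H2. unfold F, Fc, psi; cbn [fst snd].
  rewrite vx0, vy0, vx1, vy1, vx2, vy2.
  rewrite (xlog3x_eq x1 H1), (xlog3x_eq x2 H2).
  replace ((x1 + x2) / 2 + (x1 - x2) / 2) with x1 by field.
  replace ((x1 + x2) / 2 - (x1 - x2) / 2) with x2 by field.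
  assert (E3 : sqrt 3 * sqrt 3 = 3) by (apply sqrt_sqrt; lra).
  replace (1 - x1 - x2) with (1 - (x1 + x2)) by ring.
  set (w := xlog3x (1 - (x1 + x2))).
  set (q := sqrt 3) in *. 
  replace ((1 - (x1 + x2)) * 1 + x1 * - / 2 + x2 * - / 2) with (1 - (x1+x2) - (x1+x2)/2) by field.
  replace ((1 - (x1 + x2)) * 0 + x1 * (q / 2) + x2 * - (q / 2)) with (q * ((x1 - x2)/2)) by field.
  replace ((q * ((x1 - x2) / 2)) ^ 2) with ((q*q) * ((x1 - x2)/2)^2) by ring.
  rewrite E3. field. lra.
Qed.
Lemma psi_der beta a d : 0 < beta -> -a < d < a ->
  derivable_pt_lim (psi beta a) d (G beta (a + d) - G beta (a - d)).
Proof.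
  intros Hb Hd. apply is_derive_Reals. unfold psi, G.
  auto_derive. lra.
  replace (a + - d) with (a - d) by ring.
  rewrite !ln_mult by lra. field. lra.
Qed.

Lemma psi_endpoint beta a e : 0 < beta -> 0 < a -> 0 < e < a ->
  3 * a * beta <= ln ((2 * a - e) / e) ->
  psi beta a (a - e) < psi beta a a.
Proof.
  intros Hb Ha He Hl. unfold psi.
  replace (a + (a - e)) with (2*a - e) by ring.
  replace (a - (a - e)) with e by ring.
  replace (a + a) with (2 * a) by ring. replace (a - a) with 0 by ring.
  assert (HB : 0 < 2*a - e) by lra.
  assert (Hq : 0 < (2*a-e)/e) by (apply Rdiv_lt_0_compat; lra).
  assert (Hz : 0 < (2*a)/(2*a-e)) by (apply Rdiv_lt_0_compat; lra).
  assert (L1 := ln_ge_inv _ Hz).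
  replace (1 - / (2 * a / (2 * a - e))) with (e / (2*a)) in L1 by (field; lra).
  unfold Rdiv in L1, Hl. rewrite ln_mult, ln_Rinv in L1 by (try apply Rinv_0_lt_compat; lra).
  rewrite ln_mult, ln_Rinv in Hl by (try apply Rinv_0_lt_compat; lra).
  rewrite !ln_mult by lra.
  set (la := ln (2*a)) in *. set (lb := ln (2*a-e)) in *. set (le := ln e) in *.
  assert (K1 : e <= 2*a * (la - lb)).
  { replace e with (2*a * (e * /(2*a))) by (field; lra). apply Rmult_le_compat_l; lra. }
  assert (Hi : 0 < / beta) by (apply Rinv_0_lt_compat; lra).
  assert (K2 : e * (1 + 3*a*beta) <= e + e * (lb - le)) by nra.
  assert (K3 : / beta * e * (1 + 3*a*beta) = / beta * e + 3*a*e) by (field; lra).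
  assert (K4 : /beta * (e + e * (lb - le)) <= / beta * (2*a*(la-lb) + e*(lb-le))) by nra.
  assert (K5 : / beta * (e * (1 + 3*a*beta)) <= / beta * (e + e * (lb - le))) by nra.
  assert (K6 : / beta * (2*a*(la-lb) + e*(lb-le)) = / beta * (2*a) * la - / beta * (2*a-e) * lb - / beta * e * le + / beta * e * lb - / beta * e * lb) by ring.
  assert (Hee : 0 < e * e) by nra.
  replace (0 * ln (3 * 0)) with 0 by ring.
  assert (/ beta * e > 0) by nra.
  ring_simplify. ring_simplify in K4. ring_simplify in K5. ring_simplify in K3.
  assert (Ela : la = ln 2 + ln a) by (unfold la; apply ln_mult; lra).
  assert (Eb : / beta * beta = 1) by (field; lra).
  assert (K7 : 3 * / beta * e * a * beta = 3 * e * a) by (replace (3 * / beta * e * a * beta) with (3 * e * a * (/ beta * beta)) by ring; rewrite Eb; ring).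
  rewrite Ela in K4. lra.
Qed.

Lemma ln_le' x y : 0 < x -> x <= y -> ln x <= ln y.
Proof. intros Hx [H|H]. left; apply ln_increasing; auto. subst; lra. Qed.

Lemma psi_sym beta a d : psi beta a (- d) = psi beta a d.
Proof. unfold psi. replace (a + - d) with (a - d) by ring. replace (a - - d) with (a + d) by ring.
  replace ((- d)^2) with (d^2) by ring. ring. Qed.

Lemma psi_min_pos beta a m : 0 < beta -> 0 < a -> 0 <= m < a ->
  (forall d, 0 < d < m -> G beta (a + d) - G beta (a - d) < 0) ->
  (forall d, m < d < a -> G beta (a + d) - G beta (a - d) > 0) ->
  forall d, 0 <= d <= a -> d <> m -> psi beta a m < psi beta a d.
Proof.
  intros Hb Ha Hm Hneg Hpos.
  assert (Hder : forall c, 0 <= c < a -> derivable_pt_lim (psi beta a) c (G beta (a + c) - G beta (a - c))).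
  { intros c Hc. apply psi_der; lra. }
  assert (Hint : forall d, 0 <= d < a -> d <> m -> psi beta a m < psi beta a d).
  { intros d Hd Hdm. destruct (Rlt_or_le d m) as [Hlt|Hge].
    - apply (strict_decr (psi beta a) (fun c => G beta (a + c) - G beta (a - c)) d m); try lra.
      + intros c Hc. apply Hder. lra.
      + intros c Hc. apply Hneg. lra.
    - apply (strict_incr (psi beta a) (fun c => G beta (a + c) - G beta (a - c)) m d); try lra.
      + intros c Hc. apply Hder. lra.
      + intros c Hc. apply Hpos. lra. }
  intros d Hd Hdm. destruct (Req_dec d a) as [->|Hda]; [|apply Hint; lra].
  set (E := exp (3 * a * beta)).
  assert (HE : 0 < E) by apply exp_pos.
  set (e := Rmin (2 * a / (1 + E)) ((a - m) / 2)).
  assert (He0 : 0 < 2 * a / (1 + E)) by (apply Rdiv_lt_0_compat; lra).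
  assert (He1 : e <= 2 * a / (1 + E)) by apply Rmin_l.
  assert (He2 : e <= (a - m) / 2) by apply Rmin_r.
  assert (He3 : 0 < e) by (unfold e; apply Rmin_glb_lt; lra).
  assert (Hq : E <= (2 * a - e) / e).
  { assert (e * (1 + E) <= 2 * a).
    { apply (Rmult_le_compat_r (1 + E)) in He1; [|lra].
      replace (2 * a / (1 + E) * (1 + E)) with (2 * a) in He1 by (field; lra). lra. }
    apply (Rmult_le_reg_r e); [lra|]. replace ((2 * a - e) / e * e) with (2 * a - e) by (field; lra). lra. }
  assert (Hl : 3 * a * beta <= ln ((2 * a - e) / e)).
  { unfold E in Hq. rewrite <- (ln_exp (3 * a * beta)). apply ln_le'; auto; apply exp_pos. }
  assert (H1 := psi_endpoint beta a e Hb Ha ltac:(lra) Hl).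
  assert (H2 : psi beta a m < psi beta a (a - e)) by (apply Hint; lra).
  lra.
Qed.

Lemma psi_min beta a m : 0 < beta -> 0 < a -> 0 <= m < a ->
  (forall d, 0 < d < m -> G beta (a + d) - G beta (a - d) < 0) ->
  (forall d, m < d < a -> G beta (a + d) - G beta (a - d) > 0) ->
  forall d, - a <= d <= a -> d <> m -> d <> - m -> psi beta a m < psi beta a d.
Proof.
  intros Hb Ha Hm Hneg Hpos d Hd H1 H2.
  destruct (Rle_or_lt 0 d).
  - apply (psi_min_pos beta a m); auto. lra.
  - rewrite <- (psi_sym beta a d). apply (psi_min_pos beta a m); auto. lra. intro E. apply H2. lra.
Qed.

Definition Dg beta a d := G beta (a + d) - G beta (a - d).

Lemma Dg_der beta a d : 0 < beta -> -a < d < a ->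
  derivable_pt_lim (Dg beta a) d (/ (beta * (a + d)) + / (beta * (a - d)) - 3).
Proof.
  intros Hb Hd. apply is_derive_Reals. unfold Dg, G.
  auto_derive. lra. replace (a + - d) with (a - d) by ring. field. lra.
Qed.

Lemma Dg_der_sign beta a x : 0 < beta -> 0 <= x < a ->
  (/ (beta * (a + x)) + / (beta * (a - x)) - 3) * (beta * (a*a - x*x)) = 2 * a - 3 * beta * (a*a - x*x).
Proof. intros Hb Hx. field. lra. Qed.

Lemma Dg_small beta a : 0 < beta -> 0 < a -> a <= l beta ->
  forall d, 0 < d < a -> Dg beta a d > 0.
Proof.
  intros Hb Ha Hal d Hd. unfold l in Hal.
  assert (E0 : Dg beta a 0 = 0) by (unfold Dg; replace (a+0) with (a-0) by ring; ring).
  assert (Dg beta a 0 < Dg beta a d); [|lra].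
  apply (strict_incr (Dg beta a) (fun x => / (beta * (a + x)) + / (beta * (a - x)) - 3) 0 d); try lra.
  - intros c Hc. apply Dg_der; lra.
  - intros c Hc. assert (Hp : 0 < beta * (a*a - c*c)) by (apply Rmult_lt_0_compat; nra).
    assert (S := Dg_der_sign beta a c Hb ltac:(lra)).
    assert (2 * a - 3 * beta * (a*a - c*c) > 0).
    { assert (3 * beta * a <= 2) by (apply (Rmult_le_compat_l (3*beta)) in Hal; [|lra];
        replace (3 * beta * (2 / (3 * beta))) with 2 in Hal by (field; lra); lra).
      assert (3*beta*a*a <= 2*a) by nra. assert (0 < beta*(c*c)) by (apply Rmult_lt_0_compat; nra). nra. }
    nra.
Qed.

Lemma Dg_big beta a ds : 0 < beta -> 0 < ds < a -> Dg beta a ds = 0 ->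
  (forall d, 0 < d < ds -> Dg beta a d < 0) /\ (forall d, ds < d < a -> Dg beta a d > 0).
Proof.
  intros Hb Hds Hz.
  assert (E0 : Dg beta a 0 = 0) by (unfold Dg; replace (a+0) with (a-0) by ring; ring).
  assert (Hal : l beta < a).
  { destruct (Rlt_or_le (l beta) a) as [H|H]; auto.
    assert (X := Dg_small beta a Hb ltac:(lra) H ds Hds). lra. }
  unfold l in Hal.
  set (c := sqrt (a * (a - 2 / (3 * beta)))).
  assert (Hc2 : c * c = a * (a - 2 / (3 * beta))) by (apply sqrt_sqrt; nra).
  assert (Hc0 : 0 < c) by (apply sqrt_lt_R0; nra).
  assert (Hl0 : 0 < 2 / (3 * beta)) by (apply Rdiv_lt_0_compat; lra).
  assert (Hcc : c * c < a * a) by nra.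
  assert (Hca : c < a) by nra.
  assert (Hder : forall x, 0 <= x < a -> derivable_pt_lim (Dg beta a) x (/ (beta * (a + x)) + / (beta * (a - x)) - 3)).
  { intros x Hx. apply Dg_der; lra. }
  assert (Hneg : forall x, 0 <= x < c -> / (beta * (a + x)) + / (beta * (a - x)) - 3 < 0).
  { intros x Hx. assert (Hp : 0 < beta * (a*a - x*x)) by (apply Rmult_lt_0_compat; nra).
    assert (S := Dg_der_sign beta a x Hb ltac:(lra)).
    assert (2 * a - 3 * beta * (a*a - x*x) < 0).
    { assert (x * x < c * c) by nra. rewrite Hc2 in H.
      assert (3 * beta * (a * (a - 2 / (3 * beta))) = 3 * beta * a * a - 2 * a) by (field; lra). nra. }
    nra. }
  assert (Hpos : forall x, c < x < a -> / (beta * (a + x)) + / (beta * (a - x)) - 3 > 0).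
  { intros x Hx. assert (Hp : 0 < beta * (a*a - x*x)) by (apply Rmult_lt_0_compat; nra).
    assert (S := Dg_der_sign beta a x Hb ltac:(lra)).
    assert (2 * a - 3 * beta * (a*a - x*x) > 0).
    { assert (c * c < x * x) by nra. rewrite Hc2 in H.
      assert (3 * beta * (a * (a - 2 / (3 * beta))) = 3 * beta * a * a - 2 * a) by (field; lra). nra. }
    nra. }
  assert (Hlow : forall x, 0 < x <= c -> Dg beta a x < 0).
  { intros x Hx. assert (Dg beta a x < Dg beta a 0); [|lra].
    apply (strict_decr (Dg beta a) (fun x => / (beta * (a + x)) + / (beta * (a - x)) - 3) 0 x); try lra.
    - intros y Hy. apply Hder. lra.
    - intros y Hy. apply Hneg. lra. }
  assert (Hdc : c < ds).
  { destruct (Rlt_or_le c ds) as [H|H]; auto. assert (X := Hlow ds ltac:(lra)). lra. }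
  split.
  - intros d Hd. destruct (Rle_or_lt d c) as [H|H]. apply Hlow; lra.
    assert (Dg beta a d < Dg beta a ds); [|lra].
    apply (strict_incr (Dg beta a) (fun x => / (beta * (a + x)) + / (beta * (a - x)) - 3) c ds); try lra.
    + intros y Hy. apply Hder. lra.
    + intros y Hy. apply Hpos. lra.
  - intros d Hd. assert (Dg beta a ds < Dg beta a d); [|lra].
    apply (strict_incr (Dg beta a) (fun x => / (beta * (a + x)) + / (beta * (a - x)) - 3) c d); try lra.
    + intros y Hy. apply Hder. lra.
    + intros y Hy. apply Hpos. lra.
Qed.

Lemma line_argmin beta r s m (S : pt -> Prop) : 0 < beta -> 0 < s <= 1 -> 0 <= m < s / 2 ->
  (forall z, S z <-> Xi z /\ fst z + snd z = s) ->
  (forall d, 0 < d < m -> Dg beta (s/2) d < 0) ->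
  (forall d, m < d < s/2 -> Dg beta (s/2) d > 0) ->
  forall x, is_argmin S (fun z => F beta z r) x <->
            x = (s/2 + m, s/2 - m) \/ x = (s/2 - m, s/2 + m).
Proof.
  intros Hb Hs Hm HS Hneg Hpos.
  set (a := s / 2) in *.
  assert (Ha : 0 < a) by (unfold a; lra).
  assert (Hmin := psi_min beta a m Hb Ha Hm Hneg Hpos).
  assert (HF : forall z, S z -> F beta z r = Fc beta r s + psi beta a ((fst z - snd z)/2)).
  { intros [z1 z2] Hz. apply HS in Hz. destruct Hz as [[H1 [H2 H3]] H4]. simpl in *.
    rewrite F_line by auto. rewrite H4. reflexivity. }
  assert (HS1 : S (a + m, a - m)) by (apply HS; unfold Xi; simpl; unfold a in *; repeat split; lra).
  assert (HS2 : S (a - m, a + m)) by (apply HS; unfold Xi; simpl; unfold a in *; repeat split; lra).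
  assert (HF1 : F beta (a + m, a - m) r = Fc beta r s + psi beta a m).
  { rewrite (HF _ HS1). simpl. f_equal. f_equal. field. }
  assert (HF2 : F beta (a - m, a + m) r = Fc beta r s + psi beta a m).
  { rewrite (HF _ HS2). simpl. rewrite <- (psi_sym beta a m). f_equal. f_equal. field. }
  assert (Hge : forall z, S z -> psi beta a m <= psi beta a ((fst z - snd z)/2)).
  { intros [z1 z2] Hz. simpl. assert (Hz' := Hz). apply HS in Hz'. destruct Hz' as [[H1 [H2 H3]] H4]. simpl in *.
    set (d := (z1 - z2)/2).
    destruct (Req_dec d m) as [->|E1]. lra.
    destruct (Req_dec d (-m)) as [->|E2]. rewrite psi_sym. lra.
    left. apply Hmin; auto. unfold d, a. lra. }
  intros x. split.
  - intros [Hx Hmn]. specialize (Hmn _ HS1). simpl in Hmn. rewrite HF1, (HF _ Hx) in Hmn.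
    destruct x as [x1 x2]. assert (Hx' := Hx). apply HS in Hx'. destruct Hx' as [[H1 [H2 H3]] H4]. simpl in *.
    set (d := (x1 - x2)/2) in *.
    destruct (Req_dec d m) as [E1|E1].
    + left. unfold d, a in *. f_equal; lra.
    + destruct (Req_dec d (-m)) as [E2|E2].
      * right. unfold d, a in *. f_equal; lra.
      * exfalso. assert (psi beta a m < psi beta a d). apply Hmin; auto. unfold d, a; lra. lra.
  - intros [->| ->]; split; auto; intros z Hz; rewrite (HF _ Hz).
    + rewrite HF1. specialize (Hge z Hz). lra.
    + rewrite HF2. specialize (Hge z Hz). lra.
Qed.

Lemma der_cont f x d : derivable_pt_lim f x d -> continuity_pt f x.
Proof. intros H. apply derivable_continuous_pt. exists d. exact H. Qed.

Lemma G_der beta x : 0 < x -> derivable_pt_lim (G beta) x (/ beta * / x - 3/2).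
Proof. intros Hx. apply is_derive_Reals. unfold G. auto_derive. lra. rewrite Rmult_1_l, Rmult_1_r. reflexivity. Qed.

Lemma G_cont beta x : 0 < x -> continuity_pt (G beta) x.
Proof. intros Hx. eapply der_cont. apply G_der; auto. Qed.

Section Gsec.
Variable beta : R.
Hypothesis hb : 2 < beta.

Lemma l_pos : 0 < l beta.
Proof. unfold l. apply Rdiv_lt_0_compat; lra. Qed.
Lemma l_lt : l beta < 1/3.
Proof. unfold l. apply (Rmult_lt_reg_r (3*beta)); [lra|]. replace (2 / (3 * beta) * (3 * beta)) with 2 by (field; lra). lra. Qed.
Lemma bl : beta * l beta = 2/3.
Proof. unfold l. field. lra. Qed.

Lemma G_incr x y : 0 < x -> x < y -> y <= l beta -> G beta x < G beta y.
Proof.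
  intros Hx Hxy Hy. unfold G.
  assert (Hq : 0 < y / x) by (apply Rdiv_lt_0_compat; lra).
  assert (Hne : y / x <> 1) by (intro E; apply (Rmult_eq_compat_r x) in E; unfold Rdiv in E;
     rewrite Rmult_assoc, Rinv_l, Rmult_1_r, Rmult_1_l in E; lra).
  assert (L := ln_gt_inv _ Hq Hne).
  unfold Rdiv in L. rewrite ln_mult, ln_Rinv in L by (try apply Rinv_0_lt_compat; lra).
  replace (1 - / (y * / x)) with ((y - x) / y) in L by (field; lra).
  assert (Hib : 0 < / beta) by (apply Rinv_0_lt_compat; lra).
  assert (K : 3/2 * (y - x) <= / beta * ((y - x) / y)).
  { assert (HB := bl). replace (/ beta * ((y - x) / y)) with ((y - x) * / (beta * y)) by (field; lra).
    apply Rmult_le_compat_r with (r := y - x) in Hy; [|lra].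
    assert (beta * y <= 2/3) by nra.
    assert (3/2 <= / (beta * y)).
    { replace (3/2) with (/ (2/3)) by field. apply Rinv_le_contravar; nra. }
    nra. }
  assert (/ beta * ((y - x) / y) < / beta * (ln y + - ln x)) by (apply Rmult_lt_compat_l; lra).
  lra.
Qed.

Lemma G_decr x y : l beta <= x -> x < y -> G beta y < G beta x.
Proof.
  intros Hx Hxy. assert (Hl := l_pos). unfold G.
  assert (Hq : 0 < y / x) by (apply Rdiv_lt_0_compat; lra).
  assert (Hne : y / x <> 1) by (intro E; apply (Rmult_eq_compat_r x) in E; unfold Rdiv in E;
     rewrite Rmult_assoc, Rinv_l, Rmult_1_r, Rmult_1_l in E; lra).
  assert (L := ln_lt_sub1 _ Hq Hne).
  unfold Rdiv in L. rewrite ln_mult, ln_Rinv in L by (try apply Rinv_0_lt_compat; lra).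
  replace (y * / x - 1) with ((y - x) / x) in L by (field; lra).
  assert (Hib : 0 < / beta) by (apply Rinv_0_lt_compat; lra).
  assert (K : / beta * ((y - x) / x) <= 3/2 * (y - x)).
  { assert (HB := bl). replace (/ beta * ((y - x) / x)) with ((y - x) * / (beta * x)) by (field; lra).
    assert (2/3 <= beta * x) by nra.
    assert (/ (beta * x) <= 3/2).
    { replace (3/2) with (/ (2/3)) by field. apply Rinv_le_contravar; nra. }
    nra. }
  assert (/ beta * (ln y + - ln x) < / beta * ((y - x) / x)) by (apply Rmult_lt_compat_l; lra).
  lra.
Qed.

Lemma G_le_g x : 0 < x -> G beta x <= g beta.
Proof.
  intros Hx. unfold g. destruct (Rtotal_order x (l beta)) as [H|[->|H]].
  - left. apply G_incr; lra.
  - lra.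
  - left. apply G_decr; lra.
Qed.

Lemma H_ex y : y <= g beta -> exists x, 0 < x <= l beta /\ G beta x = y.
Proof.
  intros Hy. assert (Hl := l_pos). destruct (Req_dec y (g beta)) as [->|Hne].
  { exists (l beta). unfold g. split; [lra|auto]. }
  set (x0 := Rmin (l beta) (exp (beta * y))).
  assert (Hx0 : 0 < x0) by (unfold x0; apply Rmin_glb_lt; [lra|apply exp_pos]).
  assert (Gx0 : G beta x0 <= y).
  { unfold G. assert (ln x0 <= beta * y).
    { rewrite <- (ln_exp (beta * y)). apply ln_le'; auto. apply Rmin_r. }
    assert (/ beta * ln x0 <= y).
    { replace y with (/ beta * (beta * y)) by (field; lra). apply Rmult_le_compat_l; auto.
      left; apply Rinv_0_lt_compat; lra. }
    lra. }
  assert (Hx0l : x0 <= l beta) by apply Rmin_l.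
  destruct (Req_dec (G beta x0) y) as [E|E].
  { exists x0; split; auto; lra. }
  assert (x0 < l beta).
  { destruct Hx0l as [|E2]; auto. exfalso. rewrite E2 in Gx0. unfold g in Hne, Hy. lra. }
  destruct (ivt_up (G beta) x0 (l beta) y) as [z [Hz Ez]]; auto.
  - intros a Ha. apply G_cont. lra.
  - lra.
  - unfold g in Hy, Hne. lra.
  - exists z. split; auto. lra.
Qed.

Lemma K_ex y : y <= g beta -> exists x, l beta <= x /\ G beta x = y.
Proof.
  intros Hy. assert (Hl := l_pos). assert (Hl3 := l_lt). destruct (Req_dec y (g beta)) as [->|Hne].
  { exists (l beta). unfold g. split; [lra|auto]. }
  set (x1 := Rmax 1 (- y)).
  assert (Hx1 : 1 <= x1) by apply Rmax_l.
  assert (Hx1' : - y <= x1) by apply Rmax_r.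
  assert (Gx1 : G beta x1 <= y).
  { unfold G. assert (L := ln_le_sub1 x1 ltac:(lra)).
    assert (Hib : 0 < / beta < /2) by (split; [apply Rinv_0_lt_compat; lra| apply Rinv_lt_contravar; lra]).
    assert (/ beta * ln x1 <= / beta * (x1 - 1)) by (apply Rmult_le_compat_l; lra).
    assert (/ beta * (x1 - 1) <= /2 * (x1 - 1)) by (apply Rmult_le_compat_r; lra).
    lra. }
  destruct (Req_dec (G beta x1) y) as [E|E].
  { exists x1; split; auto; lra. }
  destruct (ivt_down (G beta) (l beta) x1 y) as [z [Hz Ez]]; auto.
  - intros a Ha. apply G_cont. lra.
  - lra.
  - unfold g in Hy, Hne. lra.
  - lra.
  - exists z. split; auto. lra.
Qed.

Lemma H_spec y : y <= g beta -> 0 < H beta y <= l beta /\ G beta (H beta y) = y.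
Proof. intros Hy. unfold H, the. apply epsilon_spec. now apply H_ex. Qed.
Lemma K_spec y : y <= g beta -> l beta <= K beta y /\ G beta (K beta y) = y.
Proof. intros Hy. unfold K, the. apply epsilon_spec. now apply K_ex. Qed.

Lemma H_lt y : y < g beta -> H beta y < l beta.
Proof. intros Hy. destruct (H_spec y ltac:(lra)) as [[H1 [H2|H2]] H3]; auto. rewrite H2 in H3. unfold g in Hy. lra. Qed.
Lemma K_gt y : y < g beta -> l beta < K beta y.
Proof. intros Hy. destruct (K_spec y ltac:(lra)) as [[H1|H1] H3]; auto. rewrite <- H1 in H3. unfold g in Hy. lra. Qed.

Lemma H_g : H beta (g beta) = l beta.
Proof. destruct (H_spec (g beta) ltac:(lra)) as [[H1 [H2|H2]] H3]; auto.
  exfalso. assert (X := G_incr _ _ H1 H2 ltac:(lra)). unfold g in *. lra. Qed.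
Lemma K_g : K beta (g beta) = l beta.
Proof. destruct (K_spec (g beta) ltac:(lra)) as [[H1|H1] H3]; auto.
  exfalso. assert (X := G_decr (l beta) (K beta (g beta)) ltac:(lra) H1). unfold g in *. lra. Qed.

Lemma K_uniq y x : l beta <= x -> G beta x = y -> K beta y = x.
Proof.
  intros Hx Ey. assert (Hy : y <= g beta) by (rewrite <- Ey; apply G_le_g; assert (X := l_pos); lra).
  destruct (K_spec y Hy) as [H1 H2].
  destruct (Rtotal_order (K beta y) x) as [E|[E|E]]; auto; exfalso.
  - assert (X := G_decr _ _ H1 E). lra.
  - assert (X := G_decr _ _ Hx E). lra.
Qed.

Lemma K_cont y0 : y0 < g beta -> continuity_pt (K beta) y0.
Proof.
  intros Hy0. assert (Hl := l_pos).
  unfold continuity_pt, continue_in, limit1_in, limit_in. simpl. unfold Rdist.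
  intros eps Heps.
  set (k0 := K beta y0). assert (Hk0 : l beta < k0) by (apply K_gt; auto).
  assert (Gk0 : G beta k0 = y0) by (apply K_spec; lra).
  set (e := Rmin eps (k0 - l beta) / 2).
  assert (He : 0 < e) by (unfold e; apply Rdiv_lt_0_compat; [apply Rmin_glb_lt|]; lra).
  assert (He1 : e < eps) by (unfold e; assert (Rmin eps (k0 - l beta) <= eps) by apply Rmin_l; lra).
  assert (He2 : e < k0 - l beta) by (unfold e; assert (Rmin eps (k0 - l beta) <= k0 - l beta) by apply Rmin_r; lra).
  assert (G1 : G beta (k0 + e) < y0) by (rewrite <- Gk0; apply G_decr; lra).
  assert (G2 : y0 < G beta (k0 - e)) by (rewrite <- Gk0; apply G_decr; lra).
  exists (Rmin (y0 - G beta (k0 + e)) (G beta (k0 - e) - y0)).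
  split. apply Rmin_glb_lt; lra.
  intros x [_ Hx].
  assert (Hx1 : Rabs (x - y0) < y0 - G beta (k0 + e)) by (eapply Rlt_le_trans; [exact Hx|apply Rmin_l]).
  assert (Hx2 : Rabs (x - y0) < G beta (k0 - e) - y0) by (eapply Rlt_le_trans; [exact Hx|apply Rmin_r]).
  apply Rabs_def2 in Hx1. apply Rabs_def2 in Hx2.
  assert (Hxg : x <= g beta) by (assert (X := G_le_g (k0 - e) ltac:(lra)); lra).
  destruct (K_spec x Hxg) as [K1 K2].
  apply Rabs_def1.
  - destruct (Rlt_or_le (K beta x - k0) e) as [|E]; [lra|exfalso].
    destruct (Req_dec (K beta x) (k0 + e)) as [E2|E2]. rewrite E2 in K2. lra.
    assert (X := G_decr (k0 + e) (K beta x) ltac:(lra) ltac:(lra)). lra.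
  - destruct (Rlt_or_le (- e) (K beta x - k0)) as [|E]; [lra|exfalso].
    destruct (Req_dec (K beta x) (k0 - e)) as [E2|E2]. rewrite E2 in K2. lra.
    assert (X := G_decr (K beta x) (k0 - e) ltac:(lra) ltac:(lra)). lra.
Qed.

Lemma H_cont y0 : y0 < g beta -> continuity_pt (H beta) y0.
Proof.
  intros Hy0. assert (Hl := l_pos).
  unfold continuity_pt, continue_in, limit1_in, limit_in. simpl. unfold Rdist.
  intros eps Heps.
  set (k0 := H beta y0). assert (Hk0 : k0 < l beta) by (apply H_lt; auto).
  assert (Hk0' : 0 < k0) by (apply H_spec; lra).
  assert (Gk0 : G beta k0 = y0) by (apply H_spec; lra).
  set (e := Rmin eps (Rmin k0 (l beta - k0)) / 2).
  assert (Hm1 : Rmin eps (Rmin k0 (l beta - k0)) <= eps) by apply Rmin_l.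
  assert (Hm2 : Rmin eps (Rmin k0 (l beta - k0)) <= Rmin k0 (l beta - k0)) by apply Rmin_r.
  assert (Hm3 : Rmin k0 (l beta - k0) <= k0) by apply Rmin_l.
  assert (Hm4 : Rmin k0 (l beta - k0) <= l beta - k0) by apply Rmin_r.
  assert (He : 0 < e) by (unfold e; apply Rdiv_lt_0_compat; [apply Rmin_glb_lt; [|apply Rmin_glb_lt]|]; lra).
  unfold e in He.
  assert (G1 : y0 < G beta (k0 + e)) by (rewrite <- Gk0; apply G_incr; unfold e; lra).
  assert (G2 : G beta (k0 - e) < y0) by (rewrite <- Gk0; apply G_incr; unfold e; lra).
  exists (Rmin (G beta (k0 + e) - y0) (y0 - G beta (k0 - e))).
  split. apply Rmin_glb_lt; lra.
  intros x [_ Hx].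
  assert (Hx1 : Rabs (x - y0) < G beta (k0 + e) - y0) by (eapply Rlt_le_trans; [exact Hx|apply Rmin_l]).
  assert (Hx2 : Rabs (x - y0) < y0 - G beta (k0 - e)) by (eapply Rlt_le_trans; [exact Hx|apply Rmin_r]).
  apply Rabs_def2 in Hx1. apply Rabs_def2 in Hx2.
  assert (Hxg : x <= g beta) by (assert (X := G_le_g (k0 + e) ltac:(unfold e; lra)); lra).
  destruct (H_spec x Hxg) as [K1 K2].
  apply Rabs_def1.
  - destruct (Rlt_or_le (H beta x - k0) eps) as [|E]; [lra|exfalso].
    assert (X := G_incr (k0 + e) (H beta x) ltac:(unfold e; lra) ltac:(unfold e; lra) ltac:(lra)). lra.
  - destruct (Rlt_or_le (- eps) (H beta x - k0)) as [|E]; [lra|exfalso].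
    assert (X := G_incr (H beta x) (k0 - e) ltac:(lra) ltac:(unfold e; lra) ltac:(unfold e; lra)). lra.
Qed.

End Gsec.

Section Part1.
Variable beta : R.
Hypothesis hb : 2 < beta.

Lemma r1_G : G beta (1 - 2 * l beta) = g beta - 3 * r1 beta / 2.
Proof.
  assert (Hl := l_pos beta hb). assert (Hl3 := l_lt beta hb).
  assert (E : 3 * beta / 2 - 2 = (1 - 2 * l beta) * / l beta) by (unfold l; field; lra).
  unfold r1, g, G. rewrite E. rewrite ln_mult, ln_Rinv by (try apply Rinv_0_lt_compat; lra).
  unfold l. field. lra.
Qed.

Lemma Phi_cont r y : y < g beta -> 0 < r ->
  continuity_pt (fun y => K beta (y - 3 * r / 2) + H beta y + K beta y) y.
Proof.
  intros Hy Hr.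
  apply (continuity_pt_plus (fun y => K beta (y - 3 * r / 2) + H beta y) (K beta)).
  apply (continuity_pt_plus (fun y => K beta (y - 3 * r / 2)) (H beta)).
  - apply (continuity_pt_comp (fun y => y - 3 * r / 2) (K beta)).
    + apply continuity_pt_minus. apply continuity_pt_id. apply continuity_pt_const. intros u v; auto.
    + apply K_cont; auto. lra.
  - apply H_cont; auto.
  - apply K_cont; auto.
Qed.

Lemma y1_ex r : 0 < r < r1 beta ->
  exists y, y <= g beta /\ K beta (y - 3 * r / 2) + H beta y + K beta y = 1.
Proof.
  intros Hr. assert (Hl := l_pos beta hb). assert (Hl3 := l_lt beta hb).
  assert (HG := r1_G).
  set (c0 := K beta (g beta - 3 * r / 2)).
  destruct (K_spec beta hb (g beta - 3 * r / 2) ltac:(lra)) as [Hc0 Gc0]. fold c0 in Hc0, Gc0.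
  assert (Hc1 : c0 < 1 - 2 * l beta).
  { destruct (Rlt_or_le c0 (1 - 2 * l beta)) as [|E]; auto. exfalso.
    destruct (Req_dec c0 (1 - 2 * l beta)) as [E2|E2].
    - rewrite E2 in Gc0. lra.
    - assert (X := G_decr beta hb (1 - 2 * l beta) c0 ltac:(lra) ltac:(lra)). lra. }
  set (e := (1 - c0 - 2 * l beta) / 3).
  assert (He : 0 < e) by (unfold e; lra).
  set (yh := Rmax (G beta (l beta + e)) (G beta (c0 + e) + 3 * r / 2)).
  assert (Yh1 : G beta (l beta + e) <= yh) by apply Rmax_l.
  assert (Yh2 : G beta (c0 + e) + 3 * r / 2 <= yh) by apply Rmax_r.
  assert (Ga : G beta (l beta + e) < g beta) by (apply G_decr; lra).
  assert (Gb : G beta (c0 + e) < g beta - 3 * r / 2) by (rewrite <- Gc0; apply G_decr; lra).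
  assert (Yhg : yh < g beta) by (unfold yh; apply Rmax_lub_lt; lra).
  assert (Kh1 : K beta yh <= l beta + e).
  { destruct (K_spec beta hb yh ltac:(lra)) as [K1 K2].
    destruct (Rle_or_lt (K beta yh) (l beta + e)) as [|E]; auto. exfalso.
    assert (X := G_decr beta hb (l beta + e) (K beta yh) ltac:(lra) E). lra. }
  assert (Kh2 : K beta (yh - 3 * r / 2) <= c0 + e).
  { destruct (K_spec beta hb (yh - 3 * r / 2) ltac:(lra)) as [K1 K2].
    destruct (Rle_or_lt (K beta (yh - 3 * r / 2)) (c0 + e)) as [|E]; auto. exfalso.
    assert (X := G_decr beta hb (c0 + e) _ ltac:(lra) E). lra. }
  assert (Hh : H beta yh <= l beta) by (apply H_spec; lra).
  set (yl := Rmin (G beta 1) yh - 1).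
  assert (Yl1 : yl < G beta 1) by (unfold yl; assert (Rmin (G beta 1) yh <= G beta 1) by apply Rmin_l; lra).
  assert (Yl2 : yl < yh) by (unfold yl; assert (Rmin (G beta 1) yh <= yh) by apply Rmin_r; lra).
  assert (Kl : 1 < K beta yl).
  { destruct (K_spec beta hb yl ltac:(lra)) as [K1 K2].
    destruct (Rlt_or_le 1 (K beta yl)) as [|E]; auto. exfalso.
    destruct E as [E|E].
    - assert (X := G_decr beta hb (K beta yl) 1 K1 E). lra.
    - rewrite E in K2. lra. }
  assert (Kl2 : l beta <= K beta (yl - 3 * r / 2)) by (apply K_spec; lra).
  assert (Hl2 : 0 < H beta yl) by (apply H_spec; lra).
  destruct (ivt_down (fun y => K beta (y - 3 * r / 2) + H beta y + K beta y) yl yh 1) as [z [Hz Ez]].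
  - intros a Ha. apply Phi_cont. lra. lra.
  - auto.
  - simpl. lra.
  - simpl. unfold e in *. lra.
  - exists z. split; auto. lra.
Qed.

Lemma y1_spec r : 0 < r < r1 beta ->
  y1 beta r <= g beta /\ K beta (y1 beta r - 3 * r / 2) + H beta (y1 beta r) + K beta (y1 beta r) = 1.
Proof. intros Hr. unfold y1, the. apply epsilon_spec. now apply y1_ex. Qed.

Lemma y1_lt r : 0 < r < r1 beta -> y1 beta r < g beta.
Proof.
  intros Hr. destruct (y1_spec r Hr) as [[H1|H1] H2]; auto. exfalso.
  rewrite H1, H_g, K_g in H2 by auto.
  assert (E : K beta (g beta - 3 * r / 2) = 1 - 2 * l beta) by lra.
  destruct (K_spec beta hb (g beta - 3 * r / 2) ltac:(lra)) as [_ E2].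
  rewrite E, r1_G in E2. lra.
Qed.

Theorem part1 r : 0 < r < r1 beta ->
  forall x, is_argmin (lline1 beta r) (fun z => F beta z r) x <->
            x = sigma1 beta r \/ x = sigma2 beta r.
Proof.
  intros Hr x. assert (Hl := l_pos beta hb).
  assert (Hy := y1_lt r Hr). destruct (y1_spec r Hr) as [_ Hsum].
  set (y := y1 beta r) in *.
  assert (Hk := K_gt beta hb y Hy). assert (Hh := H_lt beta hb y Hy).
  destruct (H_spec beta hb y ltac:(lra)) as [[Hh0 _] GH].
  destruct (K_spec beta hb y ltac:(lra)) as [_ GK].
  assert (Kp : l beta <= K beta (y - 3 * r / 2)) by (apply K_spec; lra).
  set (hy := H beta y) in *. set (ky := K beta y) in *.
  set (s := hy + ky). set (m := (ky - hy) / 2).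
  assert (Hs : 0 < s <= 1) by (unfold s; lra).
  assert (Hm : 0 < m < s / 2) by (unfold m, s; lra).
  assert (HD : Dg beta (s / 2) m = 0).
  { unfold Dg. replace (s / 2 + m) with ky by (unfold s, m; field).
    replace (s / 2 - m) with hy by (unfold s, m; field). lra. }
  destruct (Dg_big beta (s/2) m ltac:(lra) Hm HD) as [Hneg Hpos].
  assert (Hb0 : 0 < beta) by lra.
  rewrite (line_argmin beta r s m (lline1 beta r) Hb0 Hs ltac:(lra)); auto.
  - unfold sigma1, sigma2. fold y. fold hy ky.
    replace (s / 2 + m) with ky by (unfold s, m; field).
    replace (s / 2 - m) with hy by (unfold s, m; field). tauto.
  - intros z. unfold lline1. fold y hy ky. fold s. tauto.
Qed.

End Part1.

Definition Lf t := ln ((1 - 2 * t) / t).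
Definition Rc beta t := 1 - 3 * t - 2 / (3 * beta) * Lf t.

Lemma side_ok t : 0 < t < 1/2 -> t <> 0 /\ 0 < (1 + - (2 * t)) * / t /\ True.
Proof. intros Ht. split; [lra|split; auto]. apply Rmult_lt_0_compat; [lra|apply Rinv_0_lt_compat; lra]. Qed.

Lemma Rc_der beta t : 0 < beta -> 0 < t < 1/2 -> derivable_pt_lim (Rc beta) t (-3 + 2 / (3 * beta) / (t * (1 - 2 * t))).
Proof. intros Hb Ht. apply is_derive_Reals. unfold Rc, Lf. auto_derive. now apply side_ok.
  field. repeat split; lra. Qed.

Lemma h_der t : 0 < t < 1/2 -> derivable_pt_lim h t (-3 * (1 - 4 * t) * Lf t).
Proof. intros Ht. apply is_derive_Reals. unfold h, Lf. auto_derive. now apply side_ok.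
  replace ((1 + - (2 * t)) * / t) with ((1 - 2 * t) / t) by (unfold Rdiv; lra).
  field. repeat split; lra. Qed.

Lemma Lf_pos t : 0 < t < 1/3 -> 0 < Lf t.
Proof. intros Ht. unfold Lf. rewrite <- ln_1. apply ln_increasing. lra.
  apply (Rmult_lt_reg_r t); [lra|]. unfold Rdiv. rewrite Rmult_assoc, Rinv_l by lra. lra. Qed.

Lemma Lf_third : Lf (1/3) = 0.
Proof. unfold Lf. replace ((1 - 2 * (1/3)) / (1/3)) with 1 by field. apply ln_1. Qed.

Lemma h_Rc beta t : h t - Rc beta t = Lf t * (2 / (3 * beta) - 3 * t * (1 - 2 * t)).
Proof. unfold h, Rc, Lf. ring. Qed.

Lemma h_cont t : 0 < t < 1/2 -> continuity_pt h t.
Proof. intros Ht. eapply der_cont. apply h_der; auto. Qed.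
Lemma Rc_cont beta t : 0 < beta -> 0 < t < 1/2 -> continuity_pt (Rc beta) t.
Proof. intros Hb Ht. eapply der_cont. apply Rc_der; auto. Qed.

Lemma h_decr x y : 0 < x -> x < y -> y <= 1/4 -> h y < h x.
Proof.
  intros Hx Hxy Hy. apply (strict_decr h (fun t => -3 * (1 - 4 * t) * Lf t) x y); try lra.
  - intros c Hc. apply h_der. lra.
  - intros c Hc. assert (0 < Lf c) by (apply Lf_pos; lra). nra.
Qed.

Lemma h_incr x y : 1/4 <= x -> x < y -> y <= 1/3 -> h x < h y.
Proof.
  intros Hx Hxy Hy. apply (strict_incr h (fun t => -3 * (1 - 4 * t) * Lf t) x y); try lra.
  - intros c Hc. apply h_der. lra.
  - intros c Hc. assert (0 < Lf c) by (apply Lf_pos; lra). nra.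
Qed.

Lemma h_third : h (1/3) = 0.
Proof. assert (E := Lf_third). unfold Lf in E. unfold h. rewrite E. field. Qed.

Lemma h_neg t : 1/4 <= t < 1/3 -> h t < 0.
Proof. intros Ht. rewrite <- h_third. apply h_incr; lra. Qed.

Lemma m0_ex r : 0 < r < 1 -> exists t, 0 < t < k r /\ h t = r.
Proof.
  intros Hr. set (q := (1 - r) / 12). assert (Hq : 0 < q <= 1/12) by (unfold q; lra).
  set (t0 := q * q).
  assert (Ht0 : 0 < t0) by (unfold t0; nra).
  assert (Ek : k r = 4 * q) by (unfold k, q; field).
  assert (Ht0k : t0 < k r) by (rewrite Ek; unfold t0; nra).
  assert (Hk : k r < 1/3) by (unfold k; lra).
  assert (HL0 : 0 < Lf t0) by (apply Lf_pos; unfold t0; nra).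
  assert (HL1 : Lf t0 < 2 / q).
  { unfold Lf. assert (Hp : 0 < (1 - 2 * t0) / t0) by (apply Rdiv_lt_0_compat; unfold t0 in *; nra).
    assert (ln ((1 - 2 * t0) / t0) <= ln (/ q * / q)).
    { apply ln_le'; auto. unfold t0. replace (/ q * / q) with (1 / (q * q)) by (field; lra).
      unfold Rdiv. apply Rmult_le_compat_r. left; apply Rinv_0_lt_compat; nra. nra. }
    rewrite ln_mult in H by (apply Rinv_0_lt_compat; lra).
    assert (ln (/ q) < / q) by (assert (X := ln_le_sub1 (/ q) ltac:(apply Rinv_0_lt_compat; lra)); lra).
    unfold Rdiv. lra. }
  assert (Hh0 : r < h t0).
  { unfold h. fold (Lf t0).
    assert (0 <= t0 * t0 * Lf t0) by (apply Rmult_le_pos; [apply Rmult_le_pos|]; lra).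
    assert (t0 * (1 - 2 * t0) * Lf t0 = t0 * Lf t0 - 2 * (t0 * t0 * Lf t0)) by ring.
    assert (t0 * Lf t0 < t0 * (2 / q)) by (apply Rmult_lt_compat_l; auto).
    assert (E : t0 * (2 / q) = 2 * q) by (unfold t0; field; lra).
    assert (3 * t0 <= q) by (unfold t0; nra).
    assert (r = 1 - 12 * q) by (unfold q; field).
    lra. }
  assert (Hhk : h (k r) < r).
  { assert (HL : 0 < Lf (k r)) by (apply Lf_pos; unfold k; lra).
    unfold h. fold (Lf (k r)). assert (0 < k r * (1 - 2 * k r)) by (unfold k; nra).
    assert (0 < k r * (1 - 2 * k r) * Lf (k r)) by (apply Rmult_lt_0_compat; auto).
    unfold k in *. lra. }
  destruct (ivt_down h t0 (k r) r) as [z [Hz Ez]]; auto.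
  - intros a Ha. apply h_cont. lra.
  - exists z. split; auto. lra.
Qed.

Lemma m0_spec r : 0 < r < 1 -> 0 < m0 r < k r /\ h (m0 r) = r.
Proof. intros Hr. unfold m0, the. apply epsilon_spec. now apply m0_ex. Qed.

Lemma m0_lt r t : 0 < r < 1 -> 0 < t -> h t < r -> m0 r < t.
Proof.
  intros Hr Ht Hh. destruct (m0_spec r Hr) as [[H1 H2] H3].
  assert (k r < 1/3) by (unfold k; lra).
  destruct (Rlt_or_le (m0 r) t) as [|E]; auto. exfalso.
  destruct (Rle_or_lt (m0 r) (1/4)) as [E2|E2].
  - destruct E as [E|E]. assert (X := h_decr t (m0 r) Ht E E2). lra. rewrite <- E in H3. lra.
  - assert (X := h_neg (m0 r) ltac:(lra)). lra.
Qed.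

Section Part2.
Variable beta : R.
Hypothesis hb : 2 < beta.

Definition tm := (1 - sqrt (1 - 16 / (9 * beta))) / 4.
Definition cc := 2 / (9 * beta).

Lemma tm_facts : tm * (1 - 2 * tm) = cc /\ 0 < tm < 1/6.
Proof.
  unfold tm, cc. set (w := 1 - 16 / (9 * beta)).
  assert (Hw0 : 16 / (9 * beta) < 8/9).
  { apply (Rmult_lt_reg_r (9*beta)); [lra|]. replace (16 / (9 * beta) * (9 * beta)) with 16 by (field; lra). lra. }
  assert (Hw1 : 0 < 16 / (9 * beta)) by (apply Rdiv_lt_0_compat; lra).
  assert (Hq2 : sqrt w * sqrt w = w) by (apply sqrt_sqrt; unfold w; lra).
  assert (Hq0 : 0 <= sqrt w) by apply sqrt_pos.
  split.
  - replace ((1 - sqrt w) / 4 * (1 - 2 * ((1 - sqrt w) / 4))) with ((1 - sqrt w * sqrt w) / 8) by field.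
    rewrite Hq2. unfold w. field. lra.
  - split.
    + assert (sqrt w < 1) by (unfold w in *; nra). lra.
    + assert (1/3 < sqrt w) by (unfold w in *; nra). lra.
Qed.

Lemma tp_factor t : t * (1 - 2 * t) - cc = -2 * (t - tm) * (t - (1/2 - tm)).
Proof. destruct tm_facts as [E _]. rewrite <- E. field. Qed.

Lemma big_between t : tm < t <= 1/3 -> cc < t * (1 - 2 * t).
Proof. intros Ht. destruct tm_facts as [_ H]. assert (X := tp_factor t). nra. Qed.

Lemma Rc_decr x y : tm <= x -> x < y -> y <= 1/3 -> Rc beta y < Rc beta x.
Proof.
  intros Hx Hxy Hy. destruct tm_facts as [_ Htm].
  apply (strict_decr (Rc beta) (fun t => -3 + 2 / (3 * beta) / (t * (1 - 2 * t))) x y); try lra.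
  - intros c Hc. apply Rc_der; lra.
  - intros c Hc. assert (Hb := big_between c ltac:(lra)). unfold cc in Hb.
    assert (Hp : 0 < c * (1 - 2 * c)) by (assert (0 < 2 / (9 * beta)) by (apply Rdiv_lt_0_compat; lra); lra).
    assert (2 / (3 * beta) / (c * (1 - 2 * c)) < 3); [|lra].
    apply (Rmult_lt_reg_r (c * (1 - 2 * c))); auto.
    replace (2 / (3 * beta) / (c * (1 - 2 * c)) * (c * (1 - 2 * c))) with (3 * (2 / (9 * beta))) by (field; lra).
    lra.
Qed.

Lemma Rc_third : Rc beta (1/3) = 0.
Proof. unfold Rc. rewrite Lf_third. field. lra. Qed.

Lemma Rc_l : Rc beta (l beta) = r1 beta.
Proof.
  unfold Rc, r1, Lf, l.
  replace ((1 - 2 * (2 / (3 * beta))) / (2 / (3 * beta))) with (3 * beta / 2 - 2) by (field; lra).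
  field. lra.
Qed.

Lemma tm_lt_l : tm < l beta.
Proof.
  destruct tm_facts as [_ Htm]. assert (X := tp_factor (l beta)). assert (Hl3 := l_lt beta hb).
  assert (Hl0 := l_pos beta hb).
  assert (cc < l beta * (1 - 2 * l beta)).
  { unfold cc, l. apply (Rmult_lt_reg_r (9 * beta * beta)); [nra|].
    replace (2 / (9 * beta) * (9 * beta * beta)) with (2 * beta) by (field; lra).
    replace (2 / (3 * beta) * (1 - 2 * (2 / (3 * beta))) * (9 * beta * beta)) with (6 * beta - 8) by (field; lra).
    lra. }
  nra.
Qed.

Definition rs := Rc beta tm.

Lemma r1_pos : 0 < r1 beta.
Proof. rewrite <- Rc_l, <- Rc_third. destruct tm_facts as [_ Htm]. apply Rc_decr. left; apply tm_lt_l. apply l_lt; auto. lra. Qed.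

Lemma r1_lt_rs : r1 beta < rs.
Proof. rewrite <- Rc_l. unfold rs. apply Rc_decr. lra. apply tm_lt_l. left; apply l_lt; auto. Qed.

Lemma rs_lt1 : rs < 1.
Proof. unfold rs, Rc. destruct tm_facts as [_ Htm]. assert (0 < Lf tm) by (apply Lf_pos; lra).
  assert (0 < 2 / (3 * beta)) by (apply Rdiv_lt_0_compat; lra). nra. Qed.

Lemma h_tm : h tm = rs.
Proof. unfold rs. assert (E := h_Rc beta tm). destruct tm_facts as [E2 _].
  replace (2 / (3 * beta) - 3 * tm * (1 - 2 * tm)) with 0 in E. lra.
  replace (3 * tm * (1 - 2 * tm)) with (3 * (tm * (1 - 2 * tm))) by ring. rewrite E2. unfold cc. field. lra. Qed.

Lemma m0_rs : m0 rs = tm.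
Proof.
  assert (Hrs : 0 < rs < 1) by (assert (X := r1_pos); assert (Y := r1_lt_rs); assert (Z := rs_lt1); lra).
  destruct (m0_spec rs Hrs) as [[H1 H2] H3]. destruct tm_facts as [_ Htm].
  assert (HH := h_tm). assert (k rs < 1/3) by (unfold k; lra).
  destruct (Rtotal_order (m0 rs) tm) as [E|[E|E]]; auto; exfalso.
  - assert (X := h_decr (m0 rs) tm H1 E ltac:(lra)). lra.
  - destruct (Rle_or_lt (m0 rs) (1/4)).
    + assert (X := h_decr tm (m0 rs) ltac:(lra) E ltac:(lra)). lra.
    + assert (X := h_neg (m0 rs) ltac:(lra)). lra.
Qed.

Lemma f_from_Rc r t : 0 < t < 1/3 -> Rc beta t = r -> Defs.f r t = beta.
Proof.
  intros Ht E. assert (HL := Lf_pos t Ht). unfold Defs.f. fold (Lf t).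
  assert (E2 : 1 - r - 3 * t = 2 / (3 * beta) * Lf t) by (rewrite <- E; unfold Rc; ring).
  rewrite E2. field. split; lra.
Qed.

Lemma Rc_from_f r t : 0 < t -> t < k r -> Defs.f r t = beta -> Rc beta t = r.
Proof.
  intros Ht Hk E. unfold Defs.f in E. fold (Lf t) in E. unfold k in Hk.
  assert (Hd : 0 < 1 - r - 3 * t) by lra.
  assert (E2 : Lf t = 3 * beta / 2 * (1 - r - 3 * t)).
  { rewrite <- E. field. lra. }
  unfold Rc. rewrite E2. field. lra.
Qed.

Lemma r2_ex : exists r, 0 < r < 1 /\ Defs.f r (m0 r) = beta.
Proof.
  exists rs. assert (X := r1_pos); assert (Y := r1_lt_rs); assert (Z := rs_lt1).
  split. lra. rewrite m0_rs. destruct tm_facts as [_ Htm]. apply f_from_Rc. lra. reflexivity.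
Qed.

Lemma r2_eq : r2 beta = rs.
Proof.
  assert (S : 0 < r2 beta < 1 /\ Defs.f (r2 beta) (m0 (r2 beta)) = beta) by (unfold r2, the; apply epsilon_spec, r2_ex).
  destruct S as [Hr Hf]. set (r' := r2 beta) in *.
  destruct (m0_spec r' Hr) as [[H1 H2] H3]. set (s := m0 r') in *.
  assert (Hs3 : s < 1/3) by (unfold k in H2; lra).
  assert (ER := Rc_from_f r' s H1 H2 Hf).
  assert (E := h_Rc beta s). rewrite H3, ER in E.
  assert (HL := Lf_pos s ltac:(lra)).
  assert (E2 : s * (1 - 2 * s) = cc).
  { assert (2 / (3 * beta) - 3 * s * (1 - 2 * s) = 0).
    { destruct (Req_dec (2 / (3 * beta) - 3 * s * (1 - 2 * s)) 0) as [|N]; auto.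
      exfalso. assert (Lf s * (2 / (3 * beta) - 3 * s * (1 - 2 * s)) <> 0) by (apply Rmult_integral_contrapositive; split; lra). lra. }
    unfold cc. apply (Rmult_eq_reg_l 3); [|lra]. replace (3 * (2 / (9 * beta))) with (2 / (3 * beta)) by (field; lra). lra. }
  assert (X := tp_factor s). destruct tm_facts as [_ Htm].
  assert (Es : s = tm).
  { assert ((s - tm) * (s - (1/2 - tm)) = 0) by lra.
    destruct (Rmult_integral _ _ H) as [A|A]; lra. }
  unfold rs. rewrite <- Es. auto.
Qed.

Theorem part2 r : r1 beta < r < r2 beta ->
  forall x, is_argmin (lline2 beta r) (fun z => F beta z r) x <-> x = p beta r.
Proof.
  intros Hr x. rewrite r2_eq in Hr.
  assert (X := r1_pos); assert (Y := r1_lt_rs); assert (Z := rs_lt1).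
  destruct tm_facts as [_ Htm]. assert (Hl3 := l_lt beta hb). assert (Hl0 := l_pos beta hb).
  assert (Htl := tm_lt_l).
  assert (Hr01 : 0 < r < 1) by lra.
  assert (Uex : exists t, m0 r < t < k r /\ Defs.f r t = beta).
  { destruct (ivt_down (Rc beta) tm (l beta) r) as [z [Hz Ez]]; auto.
    - intros a Ha. apply Rc_cont; lra.
    - fold rs. lra.
    - rewrite Rc_l. lra.
    - exists z. assert (HL := Lf_pos z ltac:(lra)).
      split; [split|].
      + apply m0_lt; auto. lra.
        assert (E := h_Rc beta z). rewrite Ez in E.
        assert (HB := big_between z ltac:(lra)). unfold cc in HB.
        assert (2 / (3 * beta) - 3 * z * (1 - 2 * z) < 0).
        { replace (2 / (3 * beta)) with (3 * (2 / (9 * beta))) by (field; lra). nra. }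
        assert (Lf z * (2 / (3 * beta) - 3 * z * (1 - 2 * z)) < 0) by nra. lra.
      + unfold k. assert (0 < 2 / (3 * beta) * Lf z) by (apply Rmult_lt_0_compat; auto; apply Rdiv_lt_0_compat; lra).
        unfold Rc in Ez. lra.
      + apply f_from_Rc. lra. auto. }
  assert (Us : m0 r < u beta r < k r /\ Defs.f r (u beta r) = beta) by (unfold u, the; apply epsilon_spec, Uex).
  destruct Us as [[U1 U2] U3]. destruct (m0_spec r Hr01) as [[M1 _] _].
  assert (Hk3 : k r < 1/3) by (unfold k; lra).
  assert (ERc := Rc_from_f r (u beta r) ltac:(lra) U2 U3).
  assert (Hul : u beta r <= l beta).
  { destruct (Rle_or_lt (u beta r) (l beta)) as [|E]; auto. exfalso.
    assert (X1 := Rc_decr (l beta) (u beta r) ltac:(lra) E ltac:(lra)). rewrite Rc_l in X1. lra. }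
  set (uu := u beta r) in *.
  assert (Hb0 : 0 < beta) by lra.
  rewrite (line_argmin beta r (2 * uu) 0 (lline2 beta r) Hb0 ltac:(lra) ltac:(lra)).
  - unfold p. fold uu. replace (2 * uu / 2 + 0) with uu by field. replace (2 * uu / 2 - 0) with uu by field. tauto.
  - intros z. unfold lline2. fold uu. tauto.
  - intros d Hd. lra.
  - intros d Hd. apply Dg_small; lra.
Qed.

End Part2.

Theorem lemma5p11 (beta : R) (hbeta : 2 < beta) :
  (forall r, 0 < r < r1 beta ->
     forall x, is_argmin (lline1 beta r) (fun z => F beta z r) x <->
               x = sigma1 beta r \/ x = sigma2 beta r) /\
  (forall r, r1 beta < r < r2 beta ->
     forall x, is_argmin (lline2 beta r) (fun z => F beta z r) x <->
               x = p beta r).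
Proof.
  split.
  - intros r Hr. now apply part1.
  - intros r Hr. now apply part2.
Qed.
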